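(* For arbitrarily large integers $n$ there exists a family $\mathcal{F}$ of subsets of $[n]$ with $|\mathcal{F}|\ge 8n/3$ having the following two properties: (i) every $A\in\mathcal{F}$ has odd cardinality; (ii) there are no distinct $A,B,C\in\mathcal{F}$ such that $|A\cap B|$, $|A\cap C|$ and $|B\cap C|$ are all odd. *)

(* Defs.v *)
From mathcomp Require Import all_boot.
Set Implicit Arguments. Unset Strict Implicit. Unset Printing Implicit Defensive.

(* [n] is modelled as the finite type 'I_n = {0,...,n-1}; a family of
   subsets of [n] is a finite set of finite sets over 'I_n. *)

Definition all_odd (n : nat) (F : {set {set 'I_n}}) : Prop :=
  forall A, A \in F -> odd #|A|.

Definition no_odd_triangle (n : nat) (F : {set {set 'I_n}}) : Prop :=
  ~ exists A B C : {set 'I_n},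
      [/\ A \in F, B \in F, C \in F,
          [/\ A != B, A != C & B != C] &
          [/\ odd #|A :&: B|, odd #|A :&: C| & odd #|B :&: C|]].

(* Main.v *)
Require Import Defs.
From mathcomp Require Import all_boot.
Lemma card_setP n (Q : pred nat) : #|[set x : 'I_n | Q x]| = count Q (iota 0 n).
Proof.
rewrite cardsE cardE /enum_mem size_filter -val_enum_ord count_map enumT.
by [].
Qed.
Lemma count_blk (P : pred nat) b m :
  count (fun x => (x %/ 6 == b) && P (x %% 6)) (iota 0 (6 * m)) =
  if b < m then count P (iota 0 6) else 0.
Proof.
elim: m => [|m IH]; first by rewrite muln0.
have E : count (fun x => (x %/ 6 == b) && P (x %% 6)) (iota (6 * m) 6) =
         count (fun r => (m == b) && P r) (iota 0 6).
  rewrite -(addn0 (6 * m)) iotaDl count_map.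
  apply: eq_in_count => r; rewrite mem_iota add0n => hr /=.
  by rewrite (mulnC 6 m) divnMDl // divn_small // addn0 modnMDl modn_small.
rewrite mulnSr iotaD count_cat IH add0n E.
have Z : count (fun r => false && P r) (iota 0 6) = 0.
  by rewrite (@eq_count _ _ pred0) ?count_pred0.
case: (ltngtP b m) => hb.
- by rewrite ltnS (ltnW hb) Z addn0.
- by rewrite ltnNge hb Z.
- rewrite hb ltnSn add0n. by apply: eq_count.
Qed.
Definition Ls : seq (seq nat) := [:: [::0]; [::1]; [::2]; [::3]; [::4]; [::0;1;2;3;4];
 [::0;1;5]; [::0;2;5]; [::0;3;5]; [::0;4;5]; [::1;2;5]; [::1;3;5]; [::1;4;5]; [::2;3;5]; [::2;4;5]; [::3;4;5]].
Definition ic (l l' : seq nat) := count (fun r => (r \in l) && (r \in l')) (iota 0 6).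
Lemma chk : all (fun i => all (fun j => all (fun k =>
   (i == j) || (i == k) || (j == k) || ~~ [&& odd (ic (nth [::] Ls i) (nth [::] Ls j)),
      odd (ic (nth [::] Ls i) (nth [::] Ls k)) & odd (ic (nth [::] Ls j) (nth [::] Ls k))])
   (iota 0 16)) (iota 0 16)) (iota 0 16).
Proof. Time vm_compute. reflexivity. Qed.
Lemma chk2 : all (fun i => all (fun j => (i == j) || (ic (nth [::] Ls i) (nth [::] Ls j) < ic (nth [::] Ls i) (nth [::] Ls i)) || (ic (nth [::] Ls i) (nth [::] Ls j) < ic (nth [::] Ls j) (nth [::] Ls j))) (iota 0 16)) (iota 0 16)
  && all (fun i => odd (ic (nth [::] Ls i) (nth [::] Ls i))) (iota 0 16).
Proof. Time vm_compute. reflexivity. Qed.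

Definition blk m (b : nat) (l : seq nat) : {set 'I_(6 * m)} :=
  [set x : 'I_(6 * m) | (x %/ 6 == b) && (x %% 6 \in l)].

Lemma cardI m b b' l l' : b < m ->
  #|blk m b l :&: blk m b' l'| =
  count (fun r => (b == b') && (r \in l) && (r \in l')) (iota 0 6).
Proof.
move=> hb.
have -> : blk m b l :&: blk m b' l' =
   [set x : 'I_(6 * m) | (x %/ 6 == b) && ((b == b') && (x %% 6 \in l) && (x %% 6 \in l'))].
  apply/setP=> x; rewrite !inE.
  case: (x %/ 6 =P b) => [<-|] //=.
  by case: (_ == b'); case: (_ \in l); case: (_ \in l').
by rewrite (card_setP _ (fun y => (y %/ 6 == b) && ((b == b') && (y %% 6 \in l) && (y %% 6 \in l')))) (count_blk (fun r => (b == b') && (r \in l) && (r \in l'))) hb.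
Qed.

Definition fam m (p : 'I_m * 'I_16) : {set 'I_(6 * m)} :=
  blk m p.1 (nth [::] Ls p.2).
Arguments fam {m}.

Lemma cardF m (p q : 'I_m * 'I_16) :
  #|fam p :&: fam q| =
  if val (p.1) == val (q.1) then ic (nth [::] Ls p.2) (nth [::] Ls q.2) else 0.
Proof.
rewrite /fam cardI ?ltn_ord //.
case: (val (p.1) == val (q.1)) => //=; by rewrite (@eq_count _ _ pred0) ?count_pred0.
Qed.

Lemma in16 (i : 'I_16) : val i \in iota 0 16.
Proof. by rewrite mem_iota ltn_ord. Qed.

Lemma chk2a (i j : 'I_16) : (val i == val j) ||
  (ic (nth [::] Ls i) (nth [::] Ls j) < ic (nth [::] Ls i) (nth [::] Ls i)) ||
  (ic (nth [::] Ls i) (nth [::] Ls j) < ic (nth [::] Ls j) (nth [::] Ls j)).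
Proof.
move: chk2 => /andP [/allP /(_ _ (in16 i)) /allP /(_ _ (in16 j)) //] _.
Qed.

Lemma chk2b (i : 'I_16) : odd (ic (nth [::] Ls i) (nth [::] Ls i)).
Proof. by move: chk2 => /andP [_ /allP /(_ _ (in16 i))]. Qed.

Lemma pair_eq m (x y : 'I_m * 'I_16) : val (x.1) = val (y.1) -> val (x.2) = val (y.2) -> x = y.
Proof. by case: x y => [a i] [b j] /= e1 e2; rewrite (val_inj e1) (val_inj e2). Qed.

Lemma fam_inj m : injective (@fam m).
Proof.
move=> p q E.
have h1 : #|fam p :&: fam q| = #|fam p :&: fam p| by rewrite E.
have h2 : #|fam p :&: fam q| = #|fam q :&: fam q| by rewrite E.
rewrite !cardF !eqxx in h1 h2.
case: eqP h1 h2 => [e1|_] h1 h2; last first.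
  by move: (chk2b p.2); rewrite -h1.
have e2 : val (p.2) = val (q.2).
  move: (chk2a p.2 q.2); rewrite -h1 -h2 !ltnn !orbF; by move/eqP.
case: p q e1 e2 E {h1 h2} => [a i] [b j] /= e1 e2 _.
by rewrite (val_inj e1) (val_inj e2).
Qed.

Theorem lemma4p2 :
  forall N : nat, exists n : nat, N <= n /\
    exists F : {set {set 'I_n}},
      8 * n <= 3 * #|F| /\ all_odd F /\ no_odd_triangle F.
Proof.
move=> N; exists (6 * N); split; first by rewrite leq_pmull.
exists (@fam N @: setT); split; [|split].
- rewrite card_imset; last exact: fam_inj.
  rewrite cardsT card_prod !card_ord.
  by rewrite (mulnC N 16) !mulnA.
- move=> A /imsetP [p _ ->].
  by rewrite -[fam p]setIid cardF eqxx chk2b.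
- move=> [A [B [C [/imsetP [p _ ->] /imsetP [q _ ->] /imsetP [r _ ->]
     [nAB nAC nBC] [oAB oAC oBC]]]]].
  rewrite !cardF in oAB oAC oBC.
  case: eqP oAB => [e1|] oAB //.
  case: eqP oAC => [e2|] oAC //.
  have e3 : val (q.1) == val (r.1) by rewrite -e1 e2.
  rewrite e3 in oBC.
  have pq : val (p.2) != val (q.2).
    apply: contra nAB => /eqP e; apply/eqP; congr fam.
    by apply: pair_eq => //; apply/eqP.
  have pr : val (p.2) != val (r.2).
    apply: contra nAC => /eqP e; apply/eqP; congr fam.
    by apply: pair_eq => //; apply/eqP.
  have qr : val (q.2) != val (r.2).
    apply: contra nBC => /eqP e; apply/eqP; congr fam.
    by apply: pair_eq => //; apply/eqP.
  move: chk => /allP /(_ _ (in16 p.2)) /allP /(_ _ (in16 q.2)) /allP /(_ _ (in16 r.2)).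
  by rewrite (negbTE pq) (negbTE pr) (negbTE qr) oAB oAC oBC.
Qed.
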